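(* Let $G$ be a group generated by a symmetric set $S$ that is closed under conjugation, let $g$ be a positive element of $G$, and let $S_0\subset S$ be the set of elements labelling edges of the interval $[1,g]$. If the Hurwitz action is transitive on the minimal positive factorizations of $g$, then $\langle S_0\mid \mathcal R_h\rangle$ is a presentation of the interval group $G_g$, where $\mathcal R_h$ is the collection of Hurwitz relations visible in $[1,g]$.
   Context: $\ell_S(h)$ is word length of $h$ over $S$. The interval $[1,g]$ is the subgraph of the Cayley graph $\mathrm{Cay}(G,S)$ (edge $h\to hs$ labelled $s$) that is the union of all directed paths of minimal length $\ell_S(g)$ from $1$ to $g$. A positive element is one represented by a positive word over $S$; a minimal positive factorization of $g$ is a word over $S$ of length $\ell_S(g)$ representing $g$. The interval group $G_g$ is generated by $S_0$ subject to all relations read along closed loops in $[1,g]$. The Hurwitz action of the $k$-strand braid group ($k=\ell_S(g)$) on minimal positive factorizations: the $i$-th standard generator replaces the letters $ab$ in positions $i,i+1$ by $ca$ with $c=aba^{-1}$. A Hurwitz relation visible in $[1,g]$ is a relation $ab=ca$ ($a,b,c\in S$, $c=aba^{-1}$) such that the two words $ab$ and $ca$ label two directed paths of length 2 in $[1,g]$ with common start and common end. *)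

(* Defs.v *)
From mathcomp Require Import all_boot monoid.
From Stdlib Require Import Relation_Operators.
Set Implicit Arguments. Unset Strict Implicit. Unset Printing Implicit Defensive.
Local Open Scope group_scope.

Section Defs.
Variable G : groupType.

Definition word_over (S : G -> Prop) (w : seq G) : Prop :=
  forall x, x \in w -> S x.

Definition prodw (w : seq G) : G := foldr (fun x y => x * y) 1 w.

Definition generates (S : G -> Prop) : Prop :=
  forall x : G, exists w, word_over S w /\ prodw w = x.

Definition symmetric_set (S : G -> Prop) : Prop :=
  forall s, S s -> S s^-1.

Definition conj_closed (S : G -> Prop) : Prop :=
  forall s x, S s -> S (x^-1 * s * x).

Definition positive (S : G -> Prop) (g : G) : Prop :=
  exists w, word_over S w /\ prodw w = g.

Definition min_fact (S : G -> Prop) (g : G) (w : seq G) : Prop :=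
  [/\ word_over S w, prodw w = g &
      forall w', word_over S w' -> prodw w' = g -> size w <= size w'].

(** The edge h -> h s (labelled s) of Cay(G,S) lies in the interval [1,g],
    i.e. on some directed path of minimal length from 1 to g. *)
Definition interval_edge (S : G -> Prop) (g h s : G) : Prop :=
  exists u v, min_fact S g (u ++ s :: v) /\ prodw u = h.

Definition S0 (S : G -> Prop) (g : G) (s : G) : Prop :=
  exists h, interval_edge S g h s.

Definition hurwitz_move (w1 w2 : seq G) : Prop :=
  exists p q a b, w1 = p ++ a :: b :: q /\ w2 = p ++ (a * b * a^-1) :: a :: q.

(** Transitivity of the braid group action (generated by the sigma_i and their
    inverses, i.e. the symmetric closure of the moves) on the minimal positive
    factorizations of g. *)
Definition hurwitz_transitive (S : G -> Prop) (g : G) : Prop :=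
  forall w w', min_fact S g w -> min_fact S g w' ->
    clos_refl_sym_trans (seq G) hurwitz_move w w'.

(** Signed words over G (letter (s,true) = s, (s,false) = s^-1), i.e.
    elements of the free monoid mapping onto the free group on G. *)
Definition sword := seq (G * bool).

(** [reads_path S g h w h'] : the signed word w is read along an (undirected)
    edge path in [1,g] from vertex h to vertex h' (forward edges contribute
    positive letters, backward edges inverse letters). *)
Inductive reads_path (S : G -> Prop) (g : G) : G -> sword -> G -> Prop :=
| rp_nil h : reads_path S g h [::] h
| rp_fwd h s w h' : interval_edge S g h s -> reads_path S g (h * s) w h' ->
    reads_path S g h ((s, true) :: w) h'
| rp_bwd h s w h' : interval_edge S g (h * s^-1) s ->
    reads_path S g (h * s^-1) w h' ->
    reads_path S g h ((s, false) :: w) h'.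

(** Relations of the interval group: the words read along closed loops in
    [1,g], as relations w = 1. *)
Definition loop_rel (S : G -> Prop) (g : G) (u v : sword) : Prop :=
  v = [::] /\ exists h, reads_path S g h u h.

Definition hurwitz_rel (S : G -> Prop) (g : G) (u v : sword) : Prop :=
  exists h a b c,
    [/\ S a, S b, S c & c = a * b * a^-1] /\
    [/\ interval_edge S g h a, interval_edge S g (h * a) b,
        interval_edge S g h c & interval_edge S g (h * c) a] /\
    u = [:: (a, true); (b, true)] /\ v = [:: (c, true); (a, true)].

(** Two signed words are
    related iff they are equal in the group <generators | R>. *)
Inductive pres_eq (R : sword -> sword -> Prop) : sword -> sword -> Prop :=
| pe_rel p q u v : R u v -> pres_eq R (p ++ u ++ q) (p ++ v ++ q)
| pe_cancel p q x b : pres_eq R (p ++ (x, b) :: (x, ~~ b) :: q) (p ++ q)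
| pe_refl u : pres_eq R u u
| pe_sym u v : pres_eq R u v -> pres_eq R v u
| pe_trans u v w : pres_eq R u v -> pres_eq R v w -> pres_eq R u w.

Definition sword_over (A : G -> Prop) (w : sword) : Prop :=
  forall x, x \in w -> A x.1.

(** <S_0 | Rh> is a presentation of the interval group G_g = <S_0 | loops>:
    the identity on S_0 induces an isomorphism, i.e. both presentations
    identify exactly the same words over S_0. *)
Definition same_presented_group (A : G -> Prop) (R1 R2 : sword -> sword -> Prop)
  : Prop :=
  forall u v, sword_over A u -> sword_over A v -> (pres_eq R1 u v <-> pres_eq R2 u v).

End Defs.

(* Main.v *)
Require Import Defs.
From mathcomp Require Import all_boot monoid.
From Stdlib Require Import Relation_Operators Setoid.
Local Open Scope group_scope.
Set Implicit Arguments. Unset Strict Implicit.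

Section Proof.
Variable G : groupType.
Implicit Types (R : sword G -> sword G -> Prop) (x y z p q : sword G).

Lemma pe_ctx R p q u v : pres_eq R u v -> pres_eq R (p ++ u ++ q) (p ++ v ++ q).
Proof.
elim=> {u v}.
- move=> p' q' u v H. have := pe_rel (p ++ p') (q' ++ q) H. by rewrite -!catA.
- move=> p' q' x b. have := pe_cancel R (p ++ p') (q' ++ q) x b. by rewrite -!catA.
- move=> u. exact: pe_refl.
- move=> u v _ H. exact: pe_sym.
- move=> u v w _ H1 _ H2. exact: pe_trans H2.
Qed.

Lemma pe_catr R u v q : pres_eq R u v -> pres_eq R (u ++ q) (v ++ q).
Proof. move=> H. exact: (pe_ctx [::] q H). Qed.

Lemma pe_catl R u v p : pres_eq R u v -> pres_eq R (p ++ u) (p ++ v).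
Proof. move=> H. have := pe_ctx p [::] H. by rewrite !cats0. Qed.

Lemma pe_lift R1 R2 u v : (forall a b, R1 a b -> pres_eq R2 a b) ->
  pres_eq R1 u v -> pres_eq R2 u v.
Proof.
move=> HR; elim=> {u v}.
- move=> p q u v H. exact: pe_ctx (HR _ _ H).
- move=> *; exact: pe_cancel.
- move=> *; exact: pe_refl.
- move=> u v _ H. exact: pe_sym.
- move=> u v w _ H1 _ H2. exact: pe_trans H2.
Qed.

Definition sinv (w : sword G) : sword G := rev (map (fun a => (a.1, ~~ a.2)) w).

Lemma cancel_r R w : pres_eq R (w ++ sinv w) [::].
Proof.
elim: w => [|[x b] w IH] /=; first exact: pe_refl.
rewrite /sinv /= rev_cons -cats1 /=.
apply: (pe_trans (v := [:: (x, b)] ++ [:: (x, ~~ b)])).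
  have := pe_ctx [:: (x, b)] [:: (x, ~~ b)] IH. by rewrite /= catA.
exact: (pe_cancel R [::] [::] x b).
Qed.

Lemma cancel_l R w : pres_eq R (sinv w ++ w) [::].
Proof.
elim: w => [|[x b] w IH] /=; first exact: pe_refl.
rewrite /sinv /= rev_cons -cats1 -catA /=.
have := pe_cancel R (sinv w) w x (~~ b). rewrite negbK => H.
exact: pe_trans H IH.
Qed.
Arguments cancel_l R w : clear implicits.

Lemma cancel_rr R u v w : pres_eq R (u ++ w) (v ++ w) -> pres_eq R u v.
Proof.
move=> H. have H1 := pe_catr (sinv w) H. rewrite -!catA in H1.
apply: pe_trans (pe_trans H1 _).
- apply: pe_sym. have := pe_catl u (cancel_r R w). by rewrite cats0.
- have := pe_catl v (cancel_r R w). by rewrite cats0.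
Qed.

Lemma cancel_ll R u v w : pres_eq R (w ++ u) (w ++ v) -> pres_eq R u v.
Proof.
move=> H. have H1 := pe_catl (sinv w) H. rewrite !catA in H1.
apply: pe_trans (pe_trans H1 _).
- apply: pe_sym. exact: (pe_catr u (cancel_l R w)).
- exact: (pe_catr v (cancel_l R w)).
Qed.

Lemma prodw_cat (u v : seq G) : prodw (u ++ v) = prodw u * prodw v.
Proof. elim: u => [|a u IH] /=; first by rewrite mul1g. by rewrite IH mulgA. Qed.

Definition pos (w : seq G) : sword G := map (fun t : G => (t, true)) w.

Lemma pos_cat u v : pos (u ++ v) = pos u ++ pos v.
Proof. exact: map_cat. Qed.

Lemma word_over_cat S (u v : seq G) : word_over S (u ++ v) <-> word_over S u /\ word_over S v.
Proof.
split.
- move=> H; split=> x Hx; apply: H; by rewrite mem_cat Hx ?orbT.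
- move=> [H1 H2] x; rewrite mem_cat => /orP [] ?; by [apply: H1 | apply: H2].
Qed.

Lemma word_over_cons S a (u : seq G) : word_over S (a :: u) <-> S a /\ word_over S u.
Proof.
split.
- move=> H; split; first by apply: H; rewrite inE eqxx.
  move=> x Hx; apply: H; by rewrite inE Hx orbT.
- move=> [H1 H2] x; rewrite inE => /orP [/eqP -> //|]; exact: H2.
Qed.

Lemma move_step S g w1 w2 : conj_closed S -> hurwitz_move w1 w2 ->
  (min_fact S g w1 <-> min_fact S g w2) /\
  (min_fact S g w1 -> pres_eq (hurwitz_rel S g) (pos w1) (pos w2)).
Proof.
move=> Hc [p [q [a [b [-> ->]]]]].
have Hprod : prodw (p ++ a :: b :: q) = prodw (p ++ (a * b * a^-1) :: a :: q).
  by rewrite !prodw_cat /= !mulgA mulgVK.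
have Hsz : size (p ++ a :: b :: q) = size (p ++ (a * b * a^-1) :: a :: q).
  by rewrite !size_cat.
have Hw : word_over S (p ++ a :: b :: q) <-> word_over S (p ++ (a * b * a^-1) :: a :: q).
  rewrite !word_over_cat !word_over_cons; split.
  - move=> [Hp [Ha [Hb Hq]]]; do !split => //.
    have := Hc b a^-1 Hb. by rewrite invgK.
  - move=> [Hp [Hc' [Ha Hq]]]; do !split => //.
    have := Hc _ a Hc'. by rewrite !mulgA mulVg mul1g mulgVK.
have Hiff : min_fact S g (p ++ a :: b :: q) <-> min_fact S g (p ++ (a * b * a^-1) :: a :: q).
  split; move=> [H1 H2 H3]; split.
  - by apply/Hw.
  - by rewrite -Hprod.
  - by move=> w' Hw' Hp'; rewrite -Hsz; apply: H3.
  - by apply/Hw.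
  - by rewrite Hprod.
  - by move=> w' Hw' Hp'; rewrite Hsz; apply: H3.
split => // Hm.
have Hm2 := proj1 Hiff Hm.
rewrite !pos_cat /=.
have := @pe_rel _ (hurwitz_rel S g) (pos p) (pos q) [:: (a, true); (b, true)]
  [:: (a * b * a^-1, true); (a, true)].
apply. exists (prodw p), a, b, (a * b * a^-1).
case: (Hm) => Hwo _ _; case: (Hm2) => Hwo2 _ _.
move/word_over_cat: Hwo => [_ /word_over_cons [Ha /word_over_cons [Hb _]]].
move/word_over_cat: Hwo2 => [_ /word_over_cons [Hc' _]].
split; first by split.
split; last by split.
split.
- by exists p, (b :: q).
- exists (p ++ [:: a]), q. rewrite -catA prodw_cat /= mulg1. by split.
- by exists p, (a :: q).
- exists (p ++ [:: a * b * a^-1]), q. rewrite -catA prodw_cat /= mulg1. by split.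
Qed.

Lemma chain S g w1 w2 : conj_closed S ->
  clos_refl_sym_trans (seq G) (@hurwitz_move G) w1 w2 ->
  (min_fact S g w1 <-> min_fact S g w2) /\
  (min_fact S g w1 -> pres_eq (hurwitz_rel S g) (pos w1) (pos w2)).
Proof.
move=> Hc; elim=> {w1 w2}.
- move=> x y H. exact: move_step.
- move=> x; split => // _; exact: pe_refl.
- move=> x y _ [H1 H2]; split; first by split; apply H1.
  move=> Hy. apply: pe_sym. apply: H2. by apply/H1.
- move=> x y z _ [H1 H2] _ [H3 H4]; split; first by rewrite H1.
  move=> Hx. apply: pe_trans (H2 Hx) (H4 _). by apply/H1.
Qed.

Definition prefix S g (h : G) (u : seq G) := exists v, min_fact S g (u ++ v) /\ prodw u = h.

Lemma key S g h u u' : conj_closed S -> hurwitz_transitive S g ->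
  prefix S g h u -> prefix S g h u' -> pres_eq (hurwitz_rel S g) (pos u) (pos u').
Proof.
move=> Hc Ht [v [[Hw Hp Hm] Hu]] [v' [[Hw' Hp' Hm'] Hu']].
move/word_over_cat: (Hw) => [Hwu Hwv]. move/word_over_cat: (Hw') => [Hwu' Hwv'].
have e1 : size u <= size u'.
  have := Hm (u' ++ v). rewrite !size_cat leq_add2r. apply.
  - by apply/word_over_cat.
  - by rewrite prodw_cat Hu' -Hu -prodw_cat.
have e2 : size u' <= size u.
  have := Hm' (u ++ v'). rewrite !size_cat leq_add2r. apply.
  - by apply/word_over_cat.
  - by rewrite prodw_cat Hu -Hu' -prodw_cat.
have Hmf : min_fact S g (u' ++ v).
  split.
  - by apply/word_over_cat.
  - by rewrite prodw_cat Hu' -Hu -prodw_cat.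
  - move=> w Hw0 Hpw. have := Hm w Hw0 Hpw. rewrite !size_cat.
    have -> : size u' = size u by apply/eqP; rewrite eqn_leq e1 e2. done.
have [_ H] := chain g Hc (Ht _ _ (And3 Hw Hp Hm) Hmf).
have := H (And3 Hw Hp Hm). rewrite !pos_cat. exact: cancel_rr.
Qed.

Lemma edge_prefix S g h s : interval_edge S g h s ->
  prefix S g h [::] \/ True.
Proof. by right. Qed.

Lemma path_lemma S g h w h' u u' : conj_closed S -> hurwitz_transitive S g ->
  reads_path S g h w h' -> prefix S g h u -> prefix S g h' u' ->
  pres_eq (hurwitz_rel S g) (pos u ++ w) (pos u').
Proof.
move=> Hc Ht Hr; elim: Hr u u' => {h w h'}.
- move=> h u u' Hu Hu'. rewrite cats0. exact: key Hu Hu'.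
- move=> h s w h' [a [b [Hm Ha]]] _ IH u u' Hu Hu'.
  have Pa : prefix S g h a by exists (s :: b).
  have Pas : prefix S g (h * s) (a ++ [:: s]).
    exists b; split; first by rewrite -catA.
    by rewrite prodw_cat Ha /= mulg1.
  apply: pe_trans (pe_catr ((s, true) :: w) (key Hc Ht Hu Pa)) _.
  have := IH _ _ Pas Hu'. by rewrite pos_cat -catA.
- move=> h s w h' [a [b [Hm Ha]]] _ IH u u' Hu Hu'.
  have Pa : prefix S g (h * s^-1) a by exists (s :: b).
  have Pas : prefix S g h (a ++ [:: s]).
    exists b; split; first by rewrite -catA.
    by rewrite prodw_cat Ha /= mulg1 mulgVK.
  apply: pe_trans (pe_catr ((s, false) :: w) (key Hc Ht Hu Pas)) _.
  rewrite pos_cat -catA /=.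
  apply: pe_trans (pe_cancel _ (pos a) w s true) _.
  exact: IH Pa Hu'.
Qed.

Lemma loop_to_hur (S : G -> Prop) (g : G) (u v : sword G) : conj_closed S -> hurwitz_transitive S g ->
  loop_rel S g u v -> pres_eq (hurwitz_rel S g) u v.
Proof.
move=> Hc Ht [-> [h Hr]].
case: u Hr => [|[s bb] w] Hr; first exact: pe_refl.
case: bb Hr => Hr.
- have He : interval_edge S g h s by inversion Hr.
  case: He => [a [b [Hm Ha]]].
  have Pa : prefix S g h a by exists (s :: b).
  apply: (@cancel_ll _ _ _ (pos a)). rewrite cats0.
  exact: (path_lemma Hc Ht Hr Pa Pa).
- have He : interval_edge S g (h * s^-1) s by inversion Hr.
  case: He => [a [b [Hm Ha]]].
  have Pas : prefix S g h (a ++ [:: s]).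
    exists b; split; first by rewrite -catA.
    by rewrite prodw_cat Ha /= mulg1 mulgVK.
  apply: (@cancel_ll _ _ _ (pos (a ++ [:: s]))). rewrite cats0.
  exact: (path_lemma Hc Ht Hr Pas Pas).
Qed.

Lemma hur_to_loop (S : G -> Prop) (g : G) (u v : sword G) : hurwitz_rel S g u v -> pres_eq (loop_rel S g) u v.
Proof.
move=> [h [a [b [c [[Ha Hb Hc ->] [[E1 E2 E3 E4] [-> ->]]]]]]].
set c0 := a * b * a^-1.
have L : reads_path S g h [:: (a, true); (b, true); (a, false); (c0, false)] h.
  apply: rp_fwd => //. apply: rp_fwd => //.
  have e : h * a * b * a^-1 = h * c0 by rewrite /c0 !mulgA.
  apply: rp_bwd; rewrite e //.
  have e2 : h * c0 * c0^-1 = h by rewrite mulgK.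
  apply: rp_bwd; rewrite e2 //. exact: rp_nil.
(* ab ~ ab a- c- c a ~ c a *)
apply: (pe_trans (v := [:: (a, true); (b, true); (a, false); (c0, false)] ++ [:: (c0, true); (a, true)])).
  apply: pe_sym.
  apply: pe_trans (pe_cancel _ [:: (a, true); (b, true); (a, false)] [:: (a, true)] c0 false) _.
  exact: (pe_cancel _ [:: (a, true); (b, true)] [::] a false).
have := @pe_rel _ (loop_rel S g) [::] [:: (c0, true); (a, true)]
  [:: (a, true); (b, true); (a, false); (c0, false)] [::].
by apply; split => //; exists h.
Qed.

End Proof.

Theorem proposition3p5 (G : groupType) (S : G -> Prop) (g : G) :
  generates S -> symmetric_set S -> conj_closed S -> positive S g ->
  hurwitz_transitive S g ->
  same_presented_group (S0 S g) (loop_rel S g) (hurwitz_rel S g).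
Proof.
move=> _ _ Hc _ Ht u v _ _; split.
- apply: pe_lift => a b H. exact: loop_to_hur.
- apply: pe_lift => a b H. exact: hur_to_loop.
Qed.
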